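(* The regular $\mathcal J$-length of the stack monoid $\mathbb M$ satisfies $\mathrm{len}_{\mathcal J}(\mathbb M)\le \frac{|N|^2+|N|+2}{2}+2$.
   Context: Let $\mathcal{G}=(N,T,I,P,S)$ be an indexed grammar (finite non-terminals $N$, terminals $T$, stack symbols $I$, productions of the forms $A\to w$ with $w\in T^*$, $A\to BC$, $A\to Bf$, $Af\to B$). Fix, for every $X\subseteq N$, an arbitrary binary relation $\mathcal R_X$ on $N$ (in the paper, a reachability relation in an auxiliary grammar; the bound does not depend on it). The stack monoid $\mathbb M$ has elements: all tuples $(B,Y,M,A,X)$ with $A,B\in N$, $X,Y\subseteq N$, $M\in\mathbb B^{N\times N}$ (Boolean matrices with product over $(\vee,\wedge)$), plus a neutral element $\mathbf 1$ and an absorbing element $\mathbf 0$; product $(B_2,Y_2,M_2,A_2,X_2)\cdot(B_1,Y_1,M_1,A_1,X_1)=(B_2,Y_2,M_1M_2,A_1,X_1)$ if $X_2=Y_1$ and $B_1\,\mathcal R_{X_2}\,A_2$, and $\mathbf 0$ otherwise. In a finite monoid $\mathbf M$, $x\le_{\mathcal J}y$ iff $x=ayb$ for some $a,b\in\mathbf M$; $x<_{\mathcal J}y$ iff $x\le_{\mathcal J}y$ and not $y\le_{\mathcal J}x$. An element $e$ is idempotent if $ee=e$. The regular $\mathcal J$-length $\mathrm{len}_{\mathcal J}(\mathbf M)$ is the largest $k$ such that there exist idempotents $e_1>_{\mathcal J}e_2>_{\mathcal J}\cdots>_{\mathcal J}e_k$ in $\mathbf M$. *)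

(* Defs.v *)
From mathcomp Require Import all_boot.
Set Implicit Arguments. Unset Strict Implicit. Unset Printing Implicit Defensive.

Definition bmat (N : finType) := {ffun N * N -> bool}.

Definition bmat_mul (N : finType) (M1 M2 : bmat N) : bmat N :=
  [ffun ij : N * N => [exists k : N, M1 (ij.1, k) && M2 (k, ij.2)]].

Inductive smon (N : finType) : Type :=
  | SOne : smon N
  | SZero : smon N
  | SElt : N -> {set N} -> bmat N -> N -> {set N} -> smon N.

Arguments SOne {N}.
Arguments SZero {N}.

Definition smul (N : finType) (R : {set N} -> rel N) (x y : smon N) : smon N :=
  match x, y with
  | SOne, _ => y
  | _, SOne => x
  | SZero, _ => SZero
  | _, SZero => SZero
  | SElt B2 Y2 M2 A2 X2, SElt B1 Y1 M1 A1 X1 =>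
      if (X2 == Y1) && R X2 B1 A2 then SElt B2 Y2 (bmat_mul M1 M2) A1 X1
      else SZero
  end.

Definition leJ (N : finType) (R : {set N} -> rel N) (x y : smon N) : Prop :=
  exists a b, x = smul R (smul R a y) b.

Definition ltJ (N : finType) (R : {set N} -> rel N) (x y : smon N) : Prop :=
  leJ R x y /\ ~ leJ R y x.

Definition idempotent_s (N : finType) (R : {set N} -> rel N) (e : smon N) : Prop :=
  smul R e e = e.

Definition regJchain (N : finType) (R : {set N} -> rel N) (k : nat)
  (e : nat -> smon N) : Prop :=
  (forall i, i < k -> idempotent_s R (e i)) /\
  (forall i, i.+1 < k -> ltJ R (e i.+1) (e i)).

(* Main.v *)
Require Import Defs.
From mathcomp Require Import all_boot.
From mathcomp Require Import zify.
From Stdlib Require Import Lia.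
Set Implicit Arguments. Unset Strict Implicit. Unset Printing Implicit Defensive.

Definition idmx (N : finType) : bmat N := [ffun ij : N * N => ij.1 == ij.2].

Lemma bmat_mulA (N : finType) (A B C : bmat N) :
  bmat_mul A (bmat_mul B C) = bmat_mul (bmat_mul A B) C.
Proof.
apply/ffunP=> [[i j]]; rewrite !ffunE /=.
apply/existsP/existsP => [[k /andP [Ha]]|[k /andP [] ]].
  rewrite ffunE /= => /existsP [l /andP [Hb Hc]].
  exists l; rewrite ffunE Hc andbT; apply/existsP; exists k; by rewrite Ha.
rewrite ffunE /= => /existsP [l /andP [Ha Hb]] Hc.
exists l; rewrite Ha /= ffunE; apply/existsP; exists k; by rewrite Hb.
Qed.

Lemma bmat_mul1 (N : finType) (A : bmat N) : bmat_mul (idmx N) A = A.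
Proof.
apply/ffunP=> [[i j]]; rewrite !ffunE /=.
apply/existsP/idP => [[k]|H]; first by rewrite ffunE /= => /andP [/eqP -> ].
by exists i; rewrite ffunE /= eqxx.
Qed.

Lemma bmat_mul1r (N : finType) (A : bmat N) : bmat_mul A (idmx N) = A.
Proof.
apply/ffunP=> [[i j]]; rewrite !ffunE /=.
apply/existsP/idP => [[k]|H]; first by rewrite ffunE /= => /andP [H /eqP <-].
by exists j; rewrite ffunE /= eqxx andbT.
Qed.

Definition rowm (N : finType) (M : bmat N) (i : N) : {set N} := [set j | M (i, j)].
Definition act (N : finType) (M : bmat N) (v : {set N}) : {set N} :=
  [set j | [exists k, (k \in v) && M (k, j)]].

Lemma in_act (N : finType) (M : bmat N) v j :
  (j \in act M v) = [exists k, (k \in v) && M (k, j)].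
Proof. by rewrite inE. Qed.

Lemma rowm_mul (N : finType) (A B : bmat N) i :
  rowm (bmat_mul A B) i = act B (rowm A i).
Proof.
apply/setP=> j; rewrite !inE ffunE /=.
by apply/existsP/existsP=> [[k Hk]|[k Hk]]; exists k; move: Hk; rewrite ?inE.
Qed.

Lemma act_mul (N : finType) (A B : bmat N) v :
  act (bmat_mul A B) v = act B (act A v).
Proof.
apply/setP=> j; rewrite !inE.
apply/existsP/existsP=> [[k /andP [Hk]]|[k /andP []]].
  rewrite ffunE /= => /existsP [l /andP [Hl Hj]].
  exists l; rewrite Hj andbT inE; apply/existsP; exists k; by rewrite Hk.
rewrite inE => /existsP [l /andP [Hl Hk]] Hj.
exists l; rewrite Hl /= ffunE; apply/existsP; exists k; by rewrite Hk.
Qed.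

Lemma actU (N : finType) (M : bmat N) (u v : {set N}) :
  act M (u :|: v) = act M u :|: act M v.
Proof.
apply/setP=> j; rewrite !inE.
apply/existsP/orP=> [[k /andP []]|[]].
  rewrite inE => /orP [] Hk Hj; [left|right]; apply/existsP; exists k; by rewrite Hk.
  move=> /existsP [k /andP [Hk Hj]]; exists k; by rewrite inE Hk.
move=> /existsP [k /andP [Hk Hj]]; exists k; by rewrite inE Hk orbT.
Qed.

Lemma act_sub (N : finType) (M : bmat N) (u v : {set N}) : u \subset v -> act M u \subset act M v.
Proof.
move=> /subsetP H; apply/subsetP=> j; rewrite !inE => /existsP [k /andP [Hk Hj]].
apply/existsP; exists k; by rewrite H.
Qed.

Definition idem (N : finType) (E : bmat N) := bmat_mul E E = E.

Lemma idem_trans (N : finType) (E : bmat N) i k j :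
  idem E -> E (i, k) -> E (k, j) -> E (i, j).
Proof.
move=> HE H1 H2; rewrite -HE ffunE /=; apply/existsP; exists k; by rewrite H1 H2.
Qed.

Lemma idem_split (N : finType) (E : bmat N) i j :
  idem E -> E (i, j) -> exists k, E (i, k) && E (k, j).
Proof. by move=> HE; rewrite -{1}HE ffunE /= => /existsP [k Hk]; exists k. Qed.

Lemma cyc (N : finType) (r : rel N) :
  (forall a b c, r a b -> r b c -> r a c) ->
  forall n (W : {set N}), #|W| <= n -> (exists k0, k0 \in W) ->
  (forall k, k \in W -> exists2 k', k' \in W & r k k') -> exists2 k, k \in W & r k k.
Proof.
move=> Htr; elim=> [|n IH] W HW [k0 Hk0] Hsucc.
  by move: HW; rewrite leqn0 cards_eq0 => /eqP HW; rewrite HW inE in Hk0.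
pose W' := [set k' in W | r k0 k'].
have [Hkk|Hn] := boolP (k0 \in W').
  by exists k0 => //; move: Hkk; rewrite inE => /andP [].
have [k1 Hk1 Hr1] := Hsucc k0 Hk0.
have H1 : #|W'| <= n.
  have Hs : W' \subset W :\ k0.
    apply/subsetP=> x Hx; rewrite !inE; move: Hx; rewrite inE => /andP [Hx Hr].
    rewrite Hx andbT; apply/eqP=> E; subst x; by rewrite inE Hk0 Hr in Hn.
  have := subset_leq_card Hs; rewrite (cardsD1 k0 W) Hk0 add1n in HW.
  move=> H; exact: (leq_trans H).
have H2 : exists k0, k0 \in W' by exists k1; rewrite inE Hk1.
have H3 : forall k, k \in W' -> exists2 k', k' \in W' & r k k'.
  move=> k; rewrite inE => /andP [Hk Hr].
  have [k' Hk' Hr'] := Hsucc k Hk; exists k' => //.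
  by rewrite inE Hk' (Htr _ _ _ Hr Hr').
have [k Hk Hkk] := IH W' H1 H2 H3.
by exists k => //; move: Hk; rewrite inE => /andP [].
Qed.

Lemma E1 (N : finType) (E : bmat N) i j :
  idem E -> E (i, j) -> exists u, [&& E (u, u), E (i, u) & E (u, j)].
Proof.
move=> HE Hij.
have Htr : forall a b c, E (a, b) -> E (b, c) -> E (a, c) by move=> a b c; apply: idem_trans.
have H2 : exists k0, k0 \in [set k | E (i, k) && E (k, j)].
  by have [k Hk] := idem_split HE Hij; exists k; rewrite inE.
have H3 : forall k, k \in [set k | E (i, k) && E (k, j)] ->
   exists2 k', k' \in [set k | E (i, k) && E (k, j)] & E (k, k').
  move=> k; rewrite inE => /andP [H1 H2'].
  have [k' /andP [H3 H4]] := idem_split HE H2'.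
  exists k' => //; by rewrite inE H4 (Htr _ _ _ H1 H3).
have [k Hk Hkk] := @cyc N (fun a b => E (a, b)) Htr #|N| _ (max_card _) H2 H3.
exists k; move: Hk; rewrite inE => /andP [-> ->]; by rewrite Hkk.
Qed.

Definition Sset (N : finType) (E : bmat N) : {set N} := [set s | E (s, s)].
Definition Jset (N : finType) (E : bmat N) : {set {set N}} := [set rowm E s | s in Sset E].
Definition Tset (N : finType) (E : bmat N) : {set {set N}} :=
  [set a :|: b | a in Jset E, b in Jset E].
Definition alph (N : finType) (F Q : bmat N) (v : {set N}) := act F (act Q v).

Lemma rowm_ext (N : finType) (A B : bmat N) : (forall i, rowm A i = rowm B i) -> A = B.
Proof.
move=> H; apply/ffunP=> [[i j]]; have := H i => /setP /(_ j); by rewrite !inE.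
Qed.

Lemma rowm_closed (N : finType) (E : bmat N) i k :
  idem E -> k \in rowm E i -> rowm E k \subset rowm E i.
Proof.
move=> HE; rewrite inE => Hk; apply/subsetP=> j; rewrite !inE => Hj.
exact: (idem_trans HE Hk Hj).
Qed.

Lemma act_closed (N : finType) (F : bmat N) w k :
  idem F -> k \in act F w -> rowm F k \subset act F w.
Proof.
move=> HF; rewrite in_act => /existsP [l /andP [Hl Hk]].
apply/subsetP=> j; rewrite inE => Hj; rewrite in_act; apply/existsP; exists l.
by rewrite Hl (idem_trans HF Hk Hj).
Qed.

Lemma alph_sub (N : finType) (F Q : bmat N) (u v : {set N}) : u \subset v -> alph F Q u \subset alph F Q v.
Proof. by move=> H; apply: act_sub; apply: act_sub. Qed.

Lemma alphU (N : finType) (F Q : bmat N) (u v : {set N}) : alph F Q (u :|: v) = alph F Q u :|: alph F Q v.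
Proof. by rewrite /alph !actU. Qed.

Lemma rowm_refl (N : finType) (E : bmat N) u : u \in Sset E -> u \in rowm E u.
Proof. by rewrite !inE. Qed.

Lemma Tset_in (N : finType) (E : bmat N) x y : x \in Sset E -> y \in Sset E ->
  rowm E x :|: rowm E y \in Tset E.
Proof. by move=> Hx Hy; apply/imset2P; exists (rowm E x) (rowm E y); rewrite // imset_f. Qed.

Lemma Jsub (N : finType) (E F P Q : bmat N) :
  idem E -> idem F -> F = bmat_mul P (bmat_mul E Q) ->
  forall s, s \in Sset F -> exists2 u, u \in Sset E & rowm F s = alph F Q (rowm E u).
Proof.
move=> HE HF HPQ s Hs.
have Hrow : rowm F s = alph F Q (act E (rowm P s)).
  rewrite -{1}HF rowm_mul; congr (act F _).
  by rewrite {1}HPQ rowm_mul act_mul.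
have := rowm_refl Hs; rewrite [in X in X -> _]Hrow /alph in_act => /existsP [k /andP [Hk Hks]].
move: Hk; rewrite in_act => /existsP [t /andP [Ht Htk]].
move: Ht; rewrite in_act => /existsP [p /andP [Hp Hpt]].
have [u /and3P [Huu Hpu Hut]] := E1 HE Hpt.
exists u; first by rewrite inE.
have Hsu : s \in alph F Q (rowm E u).
  rewrite /alph in_act; apply/existsP; exists k; rewrite Hks andbT.
  rewrite in_act; apply/existsP; exists t; by rewrite inE Hut.
apply/eqP; rewrite eqEsubset; apply/andP; split.
  exact: act_closed HF Hsu.
rewrite Hrow; apply: alph_sub; apply/subsetP=> x; rewrite inE => Hx.
rewrite in_act; apply/existsP; exists p; by rewrite Hp (idem_trans HE Hpu Hx).
Qed.

Lemma Tsub (N : finType) (E F P Q : bmat N) :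
  idem E -> idem F -> F = bmat_mul P (bmat_mul E Q) ->
  Tset F \subset [set alph F Q v | v in Tset E].
Proof.
move=> HE HF HPQ; apply/subsetP=> z /imset2P [a b Ha Hb ->].
move: Ha Hb => /imsetP [s1 Hs1 ->] /imsetP [s2 Hs2 ->].
have [x Hx ->] := Jsub HE HF HPQ Hs1.
have [y Hy ->] := Jsub HE HF HPQ Hs2.
by rewrite -alphU; apply: imset_f; apply: Tset_in.
Qed.

Lemma Tle (N : finType) (E F P Q : bmat N) :
  idem E -> idem F -> F = bmat_mul P (bmat_mul E Q) -> #|Tset F| <= #|Tset E|.
Proof.
move=> HE HF HPQ; apply: leq_trans (subset_leq_card (Tsub HE HF HPQ)) _.
exact: leq_imset_card.
Qed.

Lemma Teq (N : finType) (E F P Q : bmat N) :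
  idem E -> idem F -> F = bmat_mul P (bmat_mul E Q) -> #|Tset E| <= #|Tset F| ->
  exists P' Q', E = bmat_mul P' (bmat_mul F Q').
Proof.
move=> HE HF HPQ Hcard.
have Hsub := Tsub HE HF HPQ.
have Hc1 := subset_leq_card Hsub.
have Hc2 := leq_imset_card (alph F Q) (Tset E).
have Hinj : {in Tset E &, injective (alph F Q)}.
  apply/imset_injP; rewrite eqn_leq Hc2 /=; exact: leq_trans Hcard Hc1.
have Himg : [set alph F Q v | v in Tset E] = Tset F.
  apply/eqP; rewrite eq_sym eqEcard Hsub /=; exact: leq_trans Hc2 Hcard.
have alphaJ : forall u, u \in Sset E ->
    exists2 s, s \in Sset F & alph F Q (rowm E u) = rowm F s.
  move=> u Hu.
  have : alph F Q (rowm E u) \in Tset F.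
    by rewrite -Himg imset_f // -[rowm E u]setUid Tset_in.
  move=> /imset2P [a b Ha Hb Hab].
  move: Ha Hb => /imsetP [s1 Hs1 Ha] /imsetP [s2 Hs2 Hb].
  have [x Hx Hax] := Jsub HE HF HPQ Hs1.
  have [y Hy Hby] := Jsub HE HF HPQ Hs2.
  have Hr : rowm E u = rowm E x :|: rowm E y.
    apply: Hinj.
    - by rewrite -[rowm E u]setUid Tset_in.
    - by rewrite Tset_in.
    by rewrite alphU -Hax -Hby -Ha -Hb Hab.
  have := rowm_refl Hu; rewrite [in X in X -> _]Hr inE => /orP [Hux|Huy].
  - exists s1 => //; rewrite Hax; congr (alph F Q _).
    apply/eqP; rewrite eqEsubset rowm_closed // Hr subsetUl //.
  - exists s2 => //; rewrite Hby; congr (alph F Q _).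
    apply/eqP; rewrite eqEsubset rowm_closed // Hr subsetUr //.
pose Z : bmat N := [ffun ij : N * N => [exists u, [&& E (u, u), E (u, ij.2) &
   alph F Q (rowm E u) \subset rowm F ij.1]]].
exists (bmat_mul E Q), Z.
apply: rowm_ext => i.
rewrite rowm_mul act_mul rowm_mul -/(alph F Q (rowm E i)).
apply/setP=> j; rewrite in_act; apply/idP/existsP.
- rewrite inE => Hij.
  have [u /and3P [Huu Hiu Huj]] := E1 HE Hij.
  have Hu : u \in Sset E by rewrite inE.
  have [s Hs Hus] := alphaJ u Hu.
  exists s; apply/andP; split.
    have : s \in alph F Q (rowm E u) by rewrite Hus inE; move: Hs; rewrite inE.
    apply/subsetP; apply: alph_sub; apply: rowm_closed => //; by rewrite inE.
  rewrite ffunE /=; apply/existsP; exists u; by rewrite Huu Huj Hus subxx.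
- move=> [k /andP [Hk]]; rewrite ffunE /= => /existsP [u /and3P [Huu Huj Hsub']].
  move: (Hk); rewrite /alph in_act => /existsP [k2 /andP [Hk2 Hk2k]].
  move: Hk2; rewrite in_act => /existsP [t /andP [Ht Htk2]].
  move: Ht; rewrite inE => Hit.
  have [u' /and3P [Hu'u' Hiu' Hu't]] := E1 HE Hit.
  have Hku' : k \in alph F Q (rowm E u').
    rewrite /alph in_act; apply/existsP; exists k2; rewrite Hk2k andbT.
    rewrite in_act; apply/existsP; exists t; by rewrite inE Hu't.
  have Hle : alph F Q (rowm E u) \subset alph F Q (rowm E u').
    apply: subset_trans Hsub' _; exact: act_closed HF Hku'.
  have Heq : rowm E u :|: rowm E u' = rowm E u' :|: rowm E u'.
    apply: Hinj; rewrite ?Tset_in ?inE //.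
    by rewrite !alphU setUid; apply/setUidPr.
  rewrite setUid in Heq.
  have Hj : j \in rowm E u' by rewrite -Heq inE inE Huj.
  rewrite inE; move: Hj; rewrite inE => Hj; exact: idem_trans HE Hiu' Hj.
Qed.

Fixpoint tri (n : nat) : nat := if n is m.+1 then tri m + n else 0.

Lemma tri_mono m n : m <= n -> tri m <= tri n.
Proof.
elim: n => [|n IH]; first by rewrite leqn0 => /eqP ->.
rewrite leq_eqVlt => /orP [/eqP -> //|]; rewrite ltnS => H.
by apply: leq_trans (IH H) _; rewrite /= leq_addr.
Qed.

Lemma tri2 n : 2 * tri n = n * n.+1.
Proof.
elim: n => [//|n IH] /=; rewrite mulnDr IH.
lia.
Qed.

Lemma pairs_card (T : finType) : forall n (A : {set {set T}}), #|A| = n ->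
  #|[set a :|: b | a in A, b in A]| <= tri n.
Proof.
elim=> [|n IH] A HA.
  move: HA => /eqP; rewrite cards_eq0 => /eqP ->.
  rewrite leqn0 cards_eq0; apply/eqP/setP=> z; rewrite inE.
  by apply/negbTE/negP => /imset2P [a b]; rewrite inE.
have [x Hx] : exists x, x \in A.
  by apply/set0Pn; rewrite -card_gt0 HA.
have HA' : #|A :\ x| = n by move: HA; rewrite (cardsD1 x) Hx add1n => [[]].
have Hs : [set a :|: b | a in A, b in A] \subset
   [set a :|: b | a in A :\ x, b in A :\ x] :|: [set x :|: b | b in A].
  apply/subsetP=> z /imset2P [a b Ha Hb ->]; rewrite inE.
  have [Hax|Hax] := eqVneq a x.
    by subst a; apply/orP; right; apply: imset_f.
  have [Hbx|Hbx] := eqVneq b x.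
    by subst b; apply/orP; right; rewrite setUC; apply: imset_f.
  apply/orP; left; apply/imset2P; exists a b => //; rewrite !inE ?Hax ?Hbx //.
apply: leq_trans (subset_leq_card Hs) _.
apply: leq_trans (leq_card_setU _ _) _.
rewrite /= leq_add ?IH //.
by rewrite -HA; apply: leq_imset_card.
Qed.

Lemma Tset_bound (N : finType) (E : bmat N) : #|Tset E| <= tri #|N|.
Proof.
apply: leq_trans (pairs_card (erefl _)) _; apply: tri_mono.
apply: leq_trans (leq_imset_card _ _) _; exact: max_card.
Qed.

Definition mat (N : finType) (x : smon N) : bmat N :=
  match x with SElt _ _ M _ _ => M | _ => idmx N end.

Lemma smul_elt (N : finType) (R : {set N} -> rel N) x y B Y M A X :
  smul R x y = SElt B Y M A X -> M = bmat_mul (mat y) (mat x).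
Proof.
case: x => [|| B2 Y2 M2 A2 X2]; case: y => [|| B1 Y1 M1 A1 X1] //=.
- by case=> _ _ ->; rewrite bmat_mul1r.
- by case=> _ _ ->; rewrite bmat_mul1.
- by case: ifP => // _ [].
Qed.

Lemma leJ_mat (N : finType) (R : {set N} -> rel N) Bf Yf Mf Af Xf Be Ye Me Ae Xe :
  leJ R (SElt Bf Yf Mf Af Xf) (SElt Be Ye Me Ae Xe) ->
  exists P Q, Mf = bmat_mul P (bmat_mul Me Q).
Proof.
move=> [a [b Hf]].
have Hf' := smul_elt (esym Hf).
move: Hf Hf'; case Hc: (smul R a (SElt Be Ye Me Ae Xe)) => [||B Y M A X].
- by move: Hc; case: a => [|| ? ? ? ? ?] //=; case: ifP.
- by case: b.
- move=> _ ->; exists (mat b), (mat a); by rewrite /= (smul_elt Hc).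
Qed.

Definition pot (N : finType) (x : smon N) : nat :=
  match x with
  | SOne => tri #|N| + 2
  | SZero => 0
  | SElt _ _ M _ _ => #|Tset M| + 1
  end.

Lemma pot_bound (N : finType) (x : smon N) : pot x <= tri #|N| + 2.
Proof.
case: x => //= B Y M A X; apply: leq_add; [exact: Tset_bound|by []].
Qed.

Lemma leJ_refl (N : finType) (R : {set N} -> rel N) x : leJ R x x.
Proof. by exists SOne, SOne; case: x. Qed.

Lemma leJ_zero (N : finType) (R : {set N} -> rel N) y : leJ R y SZero -> y = SZero.
Proof.
move=> [a [b ->]]; case: a => [|| ? ? ? ? ?]; case: b => [|| ? ? ? ? ?] //=.
Qed.

Lemma leJ_one (N : finType) (R : {set N} -> rel N) x : leJ R SOne x -> x = SOne.
Proof.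
move=> [a [b]]; case: x => [|| ? ? ? ? ?] //; case: a => [|| ? ? ? ? ?];
  case: b => [|| ? ? ? ? ?] //=; repeat (case: ifP => //=).
Qed.

Lemma idem_elt (N : finType) (R : {set N} -> rel N) B Y M A X :
  idempotent_s R (SElt B Y M A X) -> [/\ X = Y, R X B A & idem M].
Proof.
rewrite /idempotent_s /=; case: ifP => // /andP [/eqP EX HR] [HM].
by split.
Qed.

Lemma pot_lt (N : finType) (R : {set N} -> rel N) x y :
  idempotent_s R x -> idempotent_s R y -> ltJ R y x -> pot y < pot x.
Proof.
move=> Hx Hy [Hyx Hxy].
case: x Hx Hyx Hxy => [|| Be Ye Me Ae Xe] Hx Hyx Hxy.
- case: y Hy Hyx Hxy => [|| B Y M A X] //= Hy Hyx Hxy.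
    by rewrite addn2.
  by rewrite addn1 addn2 ltnS ltnS (leq_trans (Tset_bound M)) // leq_addr.
- by case: Hxy; rewrite (leJ_zero Hyx); apply: leJ_refl.
case: y Hy Hyx Hxy => [|| Bf Yf Mf Af Xf] //= Hy Hyx Hxy.
- by have := leJ_one Hyx.
- by rewrite addn1.
have [P [Q HPQ]] := leJ_mat Hyx.
have [EXe HRe HMe] := idem_elt Hx.
have [EXf HRf HMf] := idem_elt Hy.
have Hle := Tle HMe HMf HPQ.
rewrite ltn_add2r ltn_neqAle Hle andbT; apply/negP=> /eqP Heq.
have [P' [Q' HE]] := Teq HMe HMf HPQ (eq_leq (esym Heq)).
apply: Hxy; exists (SElt Be Ye Q' Af Xf), (SElt Bf Xf P' Ae Xe).
subst Ye Yf => /=; rewrite eqxx HRf /= eqxx HRf /=.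
by rewrite -HE.
Qed.

Theorem mainTheorem15 (N : finType) (R : {set N} -> rel N)
  (k : nat) (e : nat -> smon N) :
  regJchain R k e -> 2 * k <= #|N| ^ 2 + #|N| + 2 + 4.
Proof.
move=> [Hid Hlt].
case: k Hid Hlt => [|k] Hid Hlt; first by [].
have H : forall i, i <= k -> pot (e i) + i <= pot (e 0).
  elim=> [|i IH] Hi; first by rewrite addn0.
  have Hi' : i <= k by apply: ltnW.
  have := IH Hi'.
  have := pot_lt (Hid i Hi') (Hid i.+1 Hi) (Hlt i Hi).
  lia.
have := H k (leqnn k); have := pot_bound (e 0); have := tri2 #|N|.
rewrite expnS expn1; lia.
Qed.
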